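(* Let $I\subset\mathbb{R}$ be an interval, let $a,c,g:I\to\mathbb{R}$ be given functions and $b_1,b_2,c_1,c_2$ real constants. Suppose $\beta,\gamma,\varepsilon$ are differentiable on $I$ with $$\beta'=c\beta,\qquad \gamma'=a\beta^2,\qquad \varepsilon'=-g\beta.$$ If $u(\xi,\tau),v(\xi,\tau)$ solve the coupled Burgers system $$u_\tau=u_{\xi\xi}-b_1uu_\xi-c_1(uv)_\xi,\qquad v_\tau=v_{\xi\xi}-b_2vv_\xi-c_2(uv)_\xi,$$ then $\psi(x,t)=\beta(t)u(\xi,\tau)$, $\varphi(x,t)=\beta(t)v(\xi,\tau)$, with $\xi=\beta(t)x+\varepsilon(t)$, $\tau=\gamma(t)$, solve $$\psi_t=a(t)\psi_{xx}-b_1a(t)\psi\psi_x-c_1a(t)(\psi\varphi)_x+c(t)(\psi+x\psi_x)-g(t)\psi_x,$$ $$\varphi_t=a(t)\varphi_{xx}-b_2a(t)\varphi\varphi_x-c_2a(t)(\psi\varphi)_x+c(t)(\varphi+x\varphi_x)-g(t)\varphi_x.$$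
   Context: All functions are real-valued; primes denote derivatives with respect to $t$. *)

(* Defs.v *)
From Stdlib Require Import Reals.
From Coquelicot Require Import Coquelicot.
Open Scope R_scope.

Definition is_interval (I : R -> Prop) : Prop :=
  forall a b x, I a -> I b -> a <= x <= b -> I x.

Definition d1 (f : R -> R -> R) (x t : R) : R := Derive (fun y => f y t) x.
Definition d2 (f : R -> R -> R) (x t : R) : R := Derive (fun s => f x s) t.
Definition d11 (f : R -> R -> R) (x t : R) : R := Derive (fun y => d1 f y t) x.

Definition classical_at (f : R -> R -> R) (x t : R) : Prop :=
  differentiable_pt f x t /\ ex_derive (fun y => d1 f y t) x.

Definition coupled_burgers_at (b1 b2 c1 c2 : R) (u v : R -> R -> R)
    (xi tau : R) : Prop :=
  classical_at u xi tau /\ classical_at v xi tau /\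
  d2 u xi tau = d11 u xi tau - b1 * u xi tau * d1 u xi tau
                 - c1 * d1 (fun y s => u y s * v y s) xi tau /\
  d2 v xi tau = d11 v xi tau - b2 * v xi tau * d1 v xi tau
                 - c2 * d1 (fun y s => u y s * v y s) xi tau.

Definition vc_burgers_at (a c g : R -> R) (b1 b2 c1 c2 : R)
    (psi phi : R -> R -> R) (x t : R) : Prop :=
  ex_derive (fun s => psi x s) t /\ ex_derive (fun s => phi x s) t /\
  ex_derive (fun y => psi y t) x /\ ex_derive (fun y => phi y t) x /\
  ex_derive (fun y => d1 psi y t) x /\ ex_derive (fun y => d1 phi y t) x /\
  ex_derive (fun y => psi y t * phi y t) x /\
  d2 psi x t = a t * d11 psi x t - b1 * a t * psi x t * d1 psi x t
               - c1 * a t * d1 (fun y s => psi y s * phi y s) x t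
               + c t * (psi x t + x * d1 psi x t) - g t * d1 psi x t /\
  d2 phi x t = a t * d11 phi x t - b2 * a t * phi x t * d1 phi x t
               - c2 * a t * d1 (fun y s => psi y s * phi y s) x t
               + c t * (phi x t + x * d1 phi x t) - g t * d1 phi x t.

(* Main.v *)
Require Import Defs.
From Stdlib Require Import Reals Lra.
From Coquelicot Require Import Coquelicot.
Open Scope R_scope.
Require Import Defs.

Lemma isd_mult (f h : R -> R) x df dh :
  is_derive f x df -> is_derive h x dh ->
  is_derive (fun s => f s * h s) x (df * h x + f x * dh).
Proof. intros H1 H2. exact (is_derive_mult f h x df dh H1 H2 ltac:(intros; apply Rmult_comm)). Qed.

Lemma isd_plus (f h : R -> R) x df dh :
  is_derive f x df -> is_derive h x dh ->
  is_derive (fun s => f s + h s) x (df + dh).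
Proof. intros H1 H2. exact (is_derive_plus f h x df dh H1 H2). Qed.

Lemma exd1 (w : R -> R -> R) x y :
  differentiable_pt w x y -> ex_derive (fun z => w z y) x.
Proof.
  intros [lx [ly H]]. exists (lx * 1 + ly * 0).
  apply is_derive_Reals.
  apply (derivable_pt_lim_comp_2d w (fun z => z) (fun _ => y) x lx ly 1 0 H).
  - apply derivable_pt_lim_id.
  - apply derivable_pt_lim_const.
Qed.

Lemma dchain (w : R -> R -> R) f2 f3 s l2 l3 :
  differentiable_pt w (f2 s) (f3 s) ->
  is_derive f2 s l2 -> is_derive f3 s l3 ->
  is_derive (fun s => w (f2 s) (f3 s)) s
    (d1 w (f2 s) (f3 s) * l2 + d2 w (f2 s) (f3 s) * l3).
Proof.
  intros [lx [ly H]] H2 H3.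
  destruct (differentiable_pt_lim_unique _ _ _ _ _ H) as [E1 E2].
  unfold d1, d2. rewrite E1, E2.
  apply is_derive_Reals.
  apply derivable_pt_lim_comp_2d; auto; apply is_derive_Reals; auto.
Qed.

Lemma L1 (w : R -> R -> R) k b e tau y :
  ex_derive (fun z => w z tau) (b*y+e) ->
  is_derive (fun y => k * w (b*y+e) tau) y (k * b * Derive (fun z => w z tau) (b*y+e)).
Proof.
  intros H.
  assert (H1 : is_derive (fun z => w z tau) (b*y+e) (Derive (fun z => w z tau) (b*y+e)))
    by (apply Derive_correct; auto).
  assert (H2 : is_derive (fun y => b*y+e) y b).
  { auto_derive; auto; ring. }
  pose proof (is_derive_comp _ _ _ _ _ H1 H2) as H3.
  rewrite Rmult_assoc. apply is_derive_scal. exact H3.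
Qed.

Lemma d1_eq (w : R -> R -> R) k b e tau y :
  ex_derive (fun z => w z tau) (b*y+e) ->
  Derive (fun y => k * w (b*y+e) tau) y = k * b * Derive (fun z => w z tau) (b*y+e).
Proof. intros H. apply is_derive_unique, L1, H. Qed.

Theorem theorem5
  (I : R -> Prop) (HI : is_interval I)
  (a c g : R -> R) (b1 b2 c1 c2 : R)
  (beta gamma eps : R -> R)
  (Hbeta : forall t, I t -> is_derive beta t (c t * beta t))
  (Hgamma : forall t, I t -> is_derive gamma t (a t * (beta t) ^ 2))
  (Heps : forall t, I t -> is_derive eps t (- (g t * beta t)))
  (u v : R -> R -> R)
  (Huv : forall x t, I t ->
     coupled_burgers_at b1 b2 c1 c2 u v (beta t * x + eps t) (gamma t)) :
  forall x t, I t ->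
    vc_burgers_at a c g b1 b2 c1 c2
      (fun x t => beta t * u (beta t * x + eps t) (gamma t))
      (fun x t => beta t * v (beta t * x + eps t) (gamma t)) x t.
Proof.
  intros x t Ht.
  assert (Hxd : forall y, ex_derive (fun z => u z (gamma t)) (beta t * y + eps t)
                  /\ ex_derive (fun z => v z (gamma t)) (beta t * y + eps t)).
  { intros y. destruct (Huv y t Ht) as [[Hu _] [[Hv _] _]].
    split; apply exd1; auto. }
  destruct (Huv x t Ht) as [[Hu Hu2] [[Hv Hv2] [Eu Ev]]].
  set (b := beta t) in *. set (e := eps t) in *. set (tau := gamma t) in *.
  set (xi := b * x + e) in *.
  assert (Dpsi : forall y, d1 (fun x t => beta t * u (beta t * x + eps t) (gamma t)) y t
                  = b * b * d1 u (b*y+e) tau).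
  { intros y. unfold d1. apply d1_eq. apply Hxd. }
  assert (Dphi : forall y, d1 (fun x t => beta t * v (beta t * x + eps t) (gamma t)) y t
                  = b * b * d1 v (b*y+e) tau).
  { intros y. unfold d1. apply d1_eq. apply Hxd. }
  assert (D11psi : d11 (fun x t => beta t * u (beta t * x + eps t) (gamma t)) x t
                  = b * b * b * d11 u xi tau).
  { unfold d11. rewrite (Derive_ext _ (fun y => (b*b) * d1 u (b*y+e) tau) _ Dpsi).
    apply d1_eq. exact Hu2. }
  assert (D11phi : d11 (fun x t => beta t * v (beta t * x + eps t) (gamma t)) x t
                  = b * b * b * d11 v xi tau).
  { unfold d11. rewrite (Derive_ext _ (fun y => (b*b) * d1 v (b*y+e) tau) _ Dphi).
    apply d1_eq. exact Hv2. }
  assert (Exuv : ex_derive (fun z => (fun y s => u y s * v y s) z tau) xi).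
  { apply ex_derive_mult; apply exd1; auto. }
  assert (Hprod : forall y, (fun x t => beta t * u (beta t * x + eps t) (gamma t)) y t *
                    (fun x t => beta t * v (beta t * x + eps t) (gamma t)) y t
                  = (b*b) * (fun y s => u y s * v y s) (b*y+e) tau).
  { intros y. simpl. fold b e tau. ring. }
  assert (Duv : d1 (fun y s => (beta s * u (beta s * y + eps s) (gamma s)) *
                               (beta s * v (beta s * y + eps s) (gamma s))) x t
                = b * b * b * d1 (fun y s => u y s * v y s) xi tau).
  { unfold d1. rewrite (Derive_ext _ _ _ Hprod). exact (d1_eq (fun y s => u y s * v y s) (b*b) b e tau x Exuv). }
  assert (Hlin : is_derive (fun s => beta s * x + eps s) t (c t * b * x + - (g t * b))).
  { apply isd_plus.
    - apply (is_derive_ext (fun s => x * beta s)); [intros; simpl; ring|].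
      replace (c t * b * x) with (x * (c t * b)) by ring.
      apply is_derive_scal. apply Hbeta; auto.
    - apply Heps; auto. }
  assert (Tpsi : is_derive (fun s => beta s * u (beta s * x + eps s) (gamma s)) t
        (c t * b * u xi tau + b * (d1 u xi tau * (c t * b * x + - (g t * b))
                                    + d2 u xi tau * (a t * b ^ 2)))).
  { exact (isd_mult beta (fun s => u (beta s * x + eps s) (gamma s)) t _ _ (Hbeta t Ht) (dchain u (fun s => beta s * x + eps s) gamma t _ _ Hu Hlin (Hgamma t Ht))). }
  assert (Tphi : is_derive (fun s => beta s * v (beta s * x + eps s) (gamma s)) t
        (c t * b * v xi tau + b * (d1 v xi tau * (c t * b * x + - (g t * b))
                                    + d2 v xi tau * (a t * b ^ 2)))).
  { exact (isd_mult beta (fun s => v (beta s * x + eps s) (gamma s)) t _ _ (Hbeta t Ht) (dchain v (fun s => beta s * x + eps s) gamma t _ _ Hv Hlin (Hgamma t Ht))). }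
  unfold vc_burgers_at.
  repeat split.
  - eexists; exact Tpsi.
  - eexists; exact Tphi.
  - eexists; apply L1; apply Hxd.
  - eexists; apply L1; apply Hxd.
  - eexists. apply (is_derive_ext (fun y => (b*b) * d1 u (b*y+e) tau)).
    + intros; symmetry; apply Dpsi.
    + apply L1; exact Hu2.
  - eexists. apply (is_derive_ext (fun y => (b*b) * d1 v (b*y+e) tau)).
    + intros; symmetry; apply Dphi.
    + apply L1; exact Hv2.
  - eexists. apply (is_derive_ext (fun y => (b*b) * (fun y s => u y s * v y s) (b*y+e) tau)).
    + intros; symmetry; apply Hprod.
    + exact (L1 (fun y s => u y s * v y s) (b*b) b e tau x Exuv).
  - rewrite (is_derive_unique _ _ _ Tpsi : d2 (fun x t => beta t * u (beta t * x + eps t) (gamma t)) x t = _).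
    rewrite D11psi, Duv, Dpsi. fold xi. rewrite Eu. match goal with |- ?A = ?B => change (@eq R A B) end; fold b e tau xi; ring.
  - rewrite (is_derive_unique _ _ _ Tphi : d2 (fun x t => beta t * v (beta t * x + eps t) (gamma t)) x t = _).
    rewrite D11phi, Duv, Dphi. fold xi. rewrite Ev. match goal with |- ?A = ?B => change (@eq R A B) end; fold b e tau xi; ring.
Qed.
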